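(* Let $(A,*,\circ)$ be a left skew brace and $I,J$ ideals of $A$. Then the Huq commutator $[I,J]$ is the ideal of $A$ generated by the union of the following three sets: (1) $\{\,i\circ j\circ(j\circ i)^{-\circ}\mid i\in I,\ j\in J\,\}$; (2) $\{\,i*j*(j*i)^{-*}\mid i\in I,\ j\in J\,\}$; (3) $\{\,(i\circ j)*(i*j)^{-*}\mid i\in I,\ j\in J\,\}$.
   Context: A (left) skew brace is a triple $(A,*,\circ)$ with $(A,* )$ and $(A,\circ)$ groups such that $a\circ(b*c)=(a\circ b)*a^{-*}*(a\circ c)$ for all $a,b,c\in A$; $a^{-*}$, $a^{-\circ}$ denote inverses in $(A,* )$, $(A,\circ)$; the groups share the identity. Morphisms are maps that are homomorphisms for both operations; products are componentwise. For $a,u\in A$, $\lambda_a(u)=a^{-*}*(a\circ u)$. An ideal of $A$ is a subset $I$ that is a normal subgroup of $(A,\circ)$, satisfies $I*a=a*I$ for all $a\in A$, and $\lambda_a(I)\subseteq I$ for all $a\in A$; ideals are sub-skew braces and for an ideal $K$ the cosets $a*K=a\circ K$ form the quotient skew brace $A/K$. The Huq commutator $[I,J]$ of ideals $I,J$ is the smallest ideal $K$ of $A$ such that the map $I\times J\to A/K$, $(i,j)\mapsto (i*j)*K$, is a skew brace morphism (equivalently, the kernel of the universal surjective morphism $\psi\colon A\to Q$ such that there is a skew brace morphism $\varphi\colon \psi(I)\times\psi(J)\to Q$ with $\varphi(x,1)=x$, $\varphi(1,y)=y$). *)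

(* Defs.v *)
Set Implicit Arguments.

Record skew_brace := SkewBrace {
  sb_car :> Type;
  sb_add : sb_car -> sb_car -> sb_car;      (* the operation * *)
  sb_mul : sb_car -> sb_car -> sb_car;      (* the operation o *)
  sb_one : sb_car;
  sb_addinv : sb_car -> sb_car;
  sb_mulinv : sb_car -> sb_car;
  sb_addA : forall a b c, sb_add a (sb_add b c) = sb_add (sb_add a b) c;
  sb_add1l : forall a, sb_add sb_one a = a;
  sb_add1r : forall a, sb_add a sb_one = a;
  sb_addVl : forall a, sb_add (sb_addinv a) a = sb_one;
  sb_addVr : forall a, sb_add a (sb_addinv a) = sb_one;
  sb_mulA : forall a b c, sb_mul a (sb_mul b c) = sb_mul (sb_mul a b) c;
  sb_mul1l : forall a, sb_mul sb_one a = a;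
  sb_mul1r : forall a, sb_mul a sb_one = a;
  sb_mulVl : forall a, sb_mul (sb_mulinv a) a = sb_one;
  sb_mulVr : forall a, sb_mul a (sb_mulinv a) = sb_one;
  sb_brace : forall a b c,
    sb_mul a (sb_add b c) = sb_add (sb_add (sb_mul a b) (sb_addinv a)) (sb_mul a c)
}.

Section SkewBraceDefs.
Variable A : skew_brace.

Local Notation "a * b" := (@sb_add A a b).
Local Notation "a 'o' b" := (@sb_mul A a b) (at level 40, left associativity).

Definition sb_lambda (a u : A) : A := @sb_addinv A a * (a o u).

Definition is_ideal (I : A -> Prop) : Prop :=
  I (sb_one A) /\
  (forall x y, I x -> I y -> I (x o y)) /\
  (forall x, I x -> I (@sb_mulinv A x)) /\
  (forall a x, I x -> I (a o x o @sb_mulinv A a)) /\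
  (forall a, (forall i, I i -> exists i', I i' /\ i * a = a * i') /\
             (forall i, I i -> exists i', I i' /\ a * i = i' * a)) /\
  (forall a u, I u -> I (sb_lambda a u)).

(* Equality of cosets a*K = b*K in the quotient A/K. *)
Definition coset_eq (K : A -> Prop) (a b : A) : Prop := K (@sb_addinv A a * b).

(* The map I x J -> A/K, (i,j) |-> (i*j)*K, is a skew brace morphism
   (operations on I x J componentwise; on A/K induced by representatives:
   (a*K)*(b*K) = (a*b)*K and (a*K) o (b*K) = (a o b)*K). *)
Definition huq_morph (I J K : A -> Prop) : Prop :=
  forall i i' j j', I i -> I i' -> J j -> J j' ->
    coset_eq K ((i * i') * (j * j')) ((i * j) * (i' * j')) /\
    coset_eq K ((i o i') * (j o j')) ((i * j) o (i' * j')).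

Definition is_huq_commutator (I J K : A -> Prop) : Prop :=
  is_ideal K /\ huq_morph I J K /\
  (forall K', is_ideal K' -> huq_morph I J K' -> forall x, K x -> K' x).

Definition ideal_gen (S : A -> Prop) : A -> Prop :=
  fun x => forall K, is_ideal K -> (forall s, S s -> K s) -> K x.

Definition huq_generators (I J : A -> Prop) : A -> Prop :=
  fun x => exists i j, I i /\ J j /\
    (x = (i o j) o @sb_mulinv A (j o i) \/
     x = (i * j) * @sb_addinv A (j * i) \/
     x = (i o j) * @sb_addinv A (i * j)).

End SkewBraceDefs.

Arguments sb_lambda {A} a u.
Arguments is_ideal {A} I.
Arguments coset_eq {A} K a b.
Arguments huq_morph {A} I J K.
Arguments is_huq_commutator {A} I J K.
Arguments ideal_gen {A} S x.
Arguments huq_generators {A} I J x.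

(* Main.v *)
Require Import Defs.

Section SB.
Variable A : skew_brace.
Local Notation "a <+> b" := (sb_add A a b) (at level 50, left associativity).
Local Notation "a <o> b" := (sb_mul A a b) (at level 40, left associativity).
Local Notation ng := (sb_addinv A).
Local Notation mi := (sb_mulinv A).
Local Notation e := (sb_one A).

Lemma addKl (a b : A) : ng a <+> (a <+> b) = b.
Proof. rewrite sb_addA, sb_addVl, sb_add1l; reflexivity. Qed.
Lemma addNKl (a b : A) : a <+> (ng a <+> b) = b.
Proof. rewrite sb_addA, sb_addVr, sb_add1l; reflexivity. Qed.
Lemma addKr (a b : A) : b <+> a <+> ng a = b.
Proof. rewrite <- sb_addA, sb_addVr, sb_add1r; reflexivity. Qed.
Lemma addNKr (a b : A) : b <+> ng a <+> a = b.
Proof. rewrite <- sb_addA, sb_addVl, sb_add1r; reflexivity. Qed.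
Lemma add_cancel (a b c : A) : a <+> b = a <+> c -> b = c.
Proof. intro H. rewrite <- (addKl a b), H, addKl; reflexivity. Qed.
Lemma negU (a b : A) : a <+> b = e -> ng a = b.
Proof. intro H. rewrite <- (sb_add1r A (ng a)), <- H, addKl. reflexivity. Qed.
Lemma negneg (a : A) : ng (ng a) = a.
Proof. apply negU, sb_addVl. Qed.
Lemma negadd (a b : A) : ng (a <+> b) = ng b <+> ng a.
Proof. apply negU. rewrite !sb_addA, addKr, sb_addVr; reflexivity. Qed.

Lemma mulKl (a b : A) : mi a <o> (a <o> b) = b.
Proof. rewrite sb_mulA, sb_mulVl, sb_mul1l; reflexivity. Qed.
Lemma mulKr (a b : A) : b <o> a <o> mi a = b.
Proof. rewrite <- sb_mulA, sb_mulVr, sb_mul1r; reflexivity. Qed.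
Lemma mulNKr (a b : A) : b <o> mi a <o> a = b.
Proof. rewrite <- sb_mulA, sb_mulVl, sb_mul1r; reflexivity. Qed.
Lemma minvU (a b : A) : a <o> b = e -> mi a = b.
Proof. intro H. rewrite <- (sb_mul1r A (mi a)), <- H, mulKl. reflexivity. Qed.
Lemma minvinv (a : A) : mi (mi a) = a.
Proof. apply minvU, sb_mulVl. Qed.
Lemma minvmul (a b : A) : mi (a <o> b) = mi b <o> mi a.
Proof. apply minvU. rewrite !sb_mulA, mulKr, sb_mulVr; reflexivity. Qed.

Lemma mul_lam (a u : A) : a <o> u = a <+> sb_lambda a u.
Proof. unfold sb_lambda. rewrite addNKl. reflexivity. Qed.
Lemma lam_add (a b c : A) :
  sb_lambda a (b <+> c) = sb_lambda a b <+> sb_lambda a c.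
Proof. unfold sb_lambda. rewrite sb_brace, !sb_addA. reflexivity. Qed.
Lemma lam_comp (a b c : A) :
  sb_lambda a (sb_lambda b c) = sb_lambda (a <o> b) c.
Proof.
  pose proof (sb_brace A a b (sb_lambda b c)) as H.
  rewrite <- (mul_lam b c) in H.
  rewrite (mul_lam a (sb_lambda b c)) in H.
  rewrite sb_mulA, (mul_lam (a <o> b) c) in H.
  rewrite <- (sb_addA A (a <o> b)), addKl in H.
  symmetry; eapply add_cancel; exact H.
Qed.
Lemma neg1 : ng e = e.
Proof. apply negU, sb_add1l. Qed.
Lemma lam_one (c : A) : sb_lambda e c = c.
Proof. unfold sb_lambda. rewrite neg1, sb_add1l, sb_mul1l. reflexivity. Qed.
Lemma lam_inv_l (a c : A) : sb_lambda a (sb_lambda (mi a) c) = c.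
Proof. rewrite lam_comp, sb_mulVr, lam_one. reflexivity. Qed.
Lemma lam_inv_r (a c : A) : sb_lambda (mi a) (sb_lambda a c) = c.
Proof. rewrite lam_comp, sb_mulVl, lam_one. reflexivity. Qed.
Lemma lam_neg_mul (a : A) : sb_lambda a (mi a) = ng a.
Proof. unfold sb_lambda. rewrite sb_mulVr, sb_add1r. reflexivity. Qed.
Lemma add_as_mul (x y : A) : x <+> y = x <o> sb_lambda (mi x) y.
Proof. rewrite mul_lam, lam_inv_l. reflexivity. Qed.
Lemma sub_as_lam (x y : A) : ng x <+> y = sb_lambda x (mi x <o> y).
Proof. unfold sb_lambda. rewrite sb_mulA, sb_mulVr, sb_mul1l. reflexivity. Qed.

Section Ideal.
Variable K : A -> Prop.
Hypothesis hK : is_ideal K.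

Lemma id_one : K e.
Proof. apply hK. Qed.
Lemma id_mul x y : K x -> K y -> K (x <o> y).
Proof. apply hK. Qed.
Lemma id_minv x : K x -> K (mi x).
Proof. apply hK. Qed.
Lemma id_mconj a x : K x -> K (a <o> x <o> mi a).
Proof. apply hK. Qed.
Lemma id_lam a x : K x -> K (sb_lambda a x).
Proof. apply hK. Qed.
Lemma id_add x y : K x -> K y -> K (x <+> y).
Proof. intros. rewrite add_as_mul. apply id_mul; auto. apply id_lam; auto. Qed.
Lemma id_neg x : K x -> K (ng x).
Proof. intros. rewrite <- lam_neg_mul. apply id_lam, id_minv; auto. Qed.
Lemma id_conjr a x : K x -> K (ng a <+> (x <+> a)).
Proof.
  intros Hx. destruct hK as [_ [_ [_ [_ [Hn _]]]]].
  destruct (proj1 (Hn a) x Hx) as [i' [Hi' E]]. rewrite E, addKl. exact Hi'.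
Qed.
Lemma id_conjl a x : K x -> K (a <+> x <+> ng a).
Proof.
  intros Hx. destruct hK as [_ [_ [_ [_ [Hn _]]]]].
  destruct (proj2 (Hn a) x Hx) as [i' [Hi' E]]. rewrite E, addKr. exact Hi'.
Qed.

Definition eqv x y := K (ng x <+> y).
Lemma eqv_mul_iff x y : eqv x y <-> K (mi x <o> y).
Proof.
  unfold eqv. split; intro H.
  - rewrite <- (lam_inv_r x (mi x <o> y)), <- sub_as_lam. apply id_lam; auto.
  - rewrite sub_as_lam. apply id_lam; auto.
Qed.
Lemma eqv_refl x : eqv x x.
Proof. unfold eqv. rewrite sb_addVl. apply id_one. Qed.
Lemma eqv_sym x y : eqv x y -> eqv y x.
Proof.
  unfold eqv; intro H. apply id_neg in H. rewrite negadd, negneg in H. exact H.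
Qed.
Lemma eqv_trans x y z : eqv x y -> eqv y z -> eqv x z.
Proof.
  unfold eqv; intros H1 H2. pose proof (id_add _ _ H1 H2) as H.
  rewrite <- sb_addA, addNKl in H. exact H.
Qed.
Lemma eqv_add x x' y y' : eqv x x' -> eqv y y' -> eqv (x <+> y) (x' <+> y').
Proof.
  unfold eqv; intros H1 H2.
  pose proof (id_add _ _ (id_conjr y _ H1) H2) as H.
  rewrite negadd. repeat rewrite sb_addA in H. repeat rewrite sb_addA. rewrite addKr in H. exact H.
Qed.
Lemma eqv_mul x x' y y' : eqv x x' -> eqv y y' -> eqv (x <o> y) (x' <o> y').
Proof.
  intros H1 H2. apply eqv_mul_iff in H1, H2. apply eqv_mul_iff.
  pose proof (id_mul _ _ (id_mconj (mi y) _ H1) H2) as H.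
  rewrite minvinv in H. rewrite minvmul. repeat rewrite sb_mulA in H. repeat rewrite sb_mulA.
  rewrite mulKr in H. exact H.
Qed.
Lemma eqv_of_r x y : K (x <+> ng y) -> eqv y x.
Proof.
  unfold eqv; intro H. pose proof (id_conjr y _ H) as H'.
  rewrite addNKr in H'. exact H'.
Qed.
Lemma eqv_of_mr x y : K (x <o> mi y) -> eqv y x.
Proof.
  intro H. apply eqv_mul_iff. pose proof (id_mconj (mi y) _ H) as H'.
  rewrite minvinv, <- sb_mulA, mulNKr in H'. exact H'.
Qed.
Lemma eqv_to_r x y : eqv y x -> K (x <+> ng y).
Proof.
  unfold eqv; intro H. pose proof (id_conjl y _ H) as H'.
  rewrite addNKl in H'. exact H'.
Qed.
Lemma eqv_to_mr x y : eqv y x -> K (x <o> mi y).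
Proof.
  intro H. apply eqv_mul_iff in H. pose proof (id_mconj y _ H) as H'.
  rewrite sb_mulA, sb_mulVr, sb_mul1l in H'. exact H'.
Qed.
End Ideal.
End SB.
Arguments eqv {A} K x y.

Lemma gens (A : skew_brace) (I J K' : A -> Prop) (HK' : is_ideal K')
  (HS : forall s, huq_generators I J s -> K' s) i j :
  I i -> J j ->
  eqv K' (sb_add A i j) (sb_add A j i) /\
  eqv K' (sb_add A i j) (sb_mul A i j) /\
  eqv K' (sb_mul A j i) (sb_mul A i j).
Proof.
  intros Hi Hj. split; [|split].
  - apply (eqv_sym _ _ HK'). apply (eqv_of_r _ _ HK'). apply HS.
    exists i, j. auto.
  - apply (eqv_of_r _ _ HK'). apply HS. exists i, j. auto.
  - apply (eqv_of_mr _ _ HK'). apply HS. exists i, j. auto.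
Qed.

Theorem proposition2p5 (A : skew_brace) (I J : A -> Prop) :
  is_ideal I -> is_ideal J ->
  is_huq_commutator I J (ideal_gen (huq_generators I J)).
Proof.
  intros HI HJ. unfold is_huq_commutator.
  split; [|split].
  - unfold is_ideal, ideal_gen. repeat split.
    + intros K' HK' _. apply (id_one _ _ HK').
    + intros x y Hx Hy K' HK' HS. apply (id_mul _ _ HK'); first [apply Hx; assumption | apply Hy; assumption | apply Hi; assumption | apply Hu; assumption].
    + intros x Hx K' HK' HS. apply (id_minv _ _ HK'); first [apply Hx; assumption | apply Hy; assumption | apply Hi; assumption | apply Hu; assumption].
    + intros a x Hx K' HK' HS. apply (id_mconj _ _ HK'); first [apply Hx; assumption | apply Hy; assumption | apply Hi; assumption | apply Hu; assumption].
    + intros i Hi. exists (sb_add A (sb_addinv A a) (sb_add A i a)). split.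
      * intros K' HK' HS. apply (id_conjr _ _ HK'); first [apply Hx; assumption | apply Hy; assumption | apply Hi; assumption | apply Hu; assumption].
      * rewrite addNKl. reflexivity.
    + intros i Hi. exists (sb_add A (sb_add A a i) (sb_addinv A a)). split.
      * intros K' HK' HS. apply (id_conjl _ _ HK'); first [apply Hx; assumption | apply Hy; assumption | apply Hi; assumption | apply Hu; assumption].
      * rewrite addNKr. reflexivity.
    + intros a u Hu K' HK' HS. apply (id_lam _ _ HK'); first [apply Hx; assumption | apply Hy; assumption | apply Hi; assumption | apply Hu; assumption].
  - intros i i' j j' Hi Hi' Hj Hj'. unfold coset_eq.
    split; intros K' HK' HS.
    + replace (sb_add A (sb_add A i i') (sb_add A j j'))
        with (sb_add A i (sb_add A (sb_add A i' j) j'))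
        by (repeat rewrite sb_addA; reflexivity).
      replace (sb_add A (sb_add A i j) (sb_add A i' j'))
        with (sb_add A i (sb_add A (sb_add A j i') j'))
        by (repeat rewrite sb_addA; reflexivity).
      apply (eqv_add _ _ HK'). apply (eqv_refl _ _ HK').
      apply (eqv_add _ _ HK'). apply (gens _ _ _ _ HK' HS); auto.
      apply (eqv_refl _ _ HK').
    + destruct (gens _ _ _ _ HK' HS i' j Hi' Hj) as [_ [_ G1]].
      destruct (gens _ _ _ _ HK' HS i j Hi Hj) as [_ [G3a _]].
      destruct (gens _ _ _ _ HK' HS i' j' Hi' Hj') as [_ [G3b _]].
      destruct (gens _ _ _ _ HK' HS (sb_mul A i i') (sb_mul A j j')
                  (id_mul _ _ HI _ _ Hi Hi') (id_mul _ _ HJ _ _ Hj Hj'))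
        as [_ [G3c _]].
      change (eqv K' (sb_add A (sb_mul A i i') (sb_mul A j j'))
                     (sb_mul A (sb_add A i j) (sb_add A i' j'))).
      apply (eqv_trans _ _ HK' _ _ _ G3c).
      replace (sb_mul A (sb_mul A i i') (sb_mul A j j'))
        with (sb_mul A i (sb_mul A (sb_mul A i' j) j'))
        by (repeat rewrite sb_mulA; reflexivity).
      apply (eqv_trans _ _ HK' _ (sb_mul A i (sb_mul A (sb_mul A j i') j'))).
      * apply (eqv_mul _ _ HK'). apply (eqv_refl _ _ HK').
        apply (eqv_mul _ _ HK'). apply (eqv_sym _ _ HK'); exact G1.
        apply (eqv_refl _ _ HK').
      * replace (sb_mul A i (sb_mul A (sb_mul A j i') j'))
          with (sb_mul A (sb_mul A i j) (sb_mul A i' j'))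
          by (repeat rewrite sb_mulA; reflexivity).
        apply (eqv_mul _ _ HK'); apply (eqv_sym _ _ HK'); assumption.
  - intros K' HK' Hm x Hx. apply Hx; auto.
    intros s [i [j [Hi [Hj Hs]]]].
    destruct (Hm i (sb_one A) (sb_one A) j Hi (id_one _ _ HI) (id_one _ _ HJ) Hj)
      as [_ H1].
    destruct (Hm (sb_one A) i j (sb_one A) (id_one _ _ HI) Hi Hj (id_one _ _ HJ))
      as [H2a H2b].
    unfold coset_eq in H1, H2a, H2b.
    repeat rewrite ?sb_mul1r, ?sb_mul1l, ?sb_add1r, ?sb_add1l in H1.
    repeat rewrite ?sb_mul1r, ?sb_mul1l, ?sb_add1r, ?sb_add1l in H2a.
    repeat rewrite ?sb_mul1r, ?sb_mul1l, ?sb_add1r, ?sb_add1l in H2b.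
    fold (eqv K' (sb_add A i j) (sb_mul A i j)) in H1.
    fold (eqv K' (sb_add A i j) (sb_add A j i)) in H2a.
    fold (eqv K' (sb_add A i j) (sb_mul A j i)) in H2b.
    destruct Hs as [-> | [-> | ->]].
    + apply (eqv_to_mr _ _ HK'). apply (eqv_trans _ _ HK' _ _ _ (eqv_sym _ _ HK' _ _ H2b)).
      exact H1.
    + apply (eqv_to_r _ _ HK'). apply (eqv_sym _ _ HK'). exact H2a.
    + apply (eqv_to_r _ _ HK'). exact H1.
Qed.
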